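(* Let $0<\epsilon<1$ and $0<\delta<1$. There exists a verification operator $\Omega$ for $|\Psi\rangle$ with $F(1,\delta,\Omega)\ge1-\epsilon$ (i.e. the target state can be verified within infidelity $\epsilon$ and significance level $\delta$ in the adversarial scenario using a single test, with no restriction on the accessible measurements) iff $$\delta(1-\epsilon)\le\max\{2-2\sqrt{1-\delta}-\delta,\;2\delta-1\},$$ or equivalently iff $$\delta\ge\min\Big\{\frac{4(1-\epsilon)}{(2-\epsilon)^2},\frac{1}{1+\epsilon}\Big\}=\begin{cases}\frac{1}{1+\epsilon},&0<\epsilon\le\frac45,\\ \frac{4(1-\epsilon)}{(2-\epsilon)^2},&\frac45\le\epsilon<1.\end{cases}$$
   Context: Let $\mathcal H$ be a Hilbert space of finite dimension $D\ge2$ and $|\Psi\rangle\in\mathcal H$ a unit vector. A verification operator for $|\Psi\rangle$ is a Hermitian operator $\Omega$ on $\mathcal H$ with $0\le\Omega\le1$, $\Omega|\Psi\rangle=|\Psi\rangle$, whose eigenvalue $1$ is nondegenerate. For $N=1$ and a density operator $\rho$ on $\mathcal H^{\otimes2}$ put $p_\rho=\mathrm{tr}[(\Omega\otimes1)\rho]$, $f_\rho=\mathrm{tr}[(\Omega\otimes|\Psi\rangle\langle\Psi|)\rho]$, and $F(1,\delta,\Omega)=\min\{f_\rho/p_\rho:p_\rho\ge\delta\}$, the minimum over permutation-invariant density operators on $\mathcal H^{\otimes2}$. *)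

(* Defs.v *)
From HB Require Import structures.
From mathcomp Require Import all_boot all_order all_algebra.
From mathcomp Require Import complex mxtens.
Set Implicit Arguments. Unset Strict Implicit. Unset Printing Implicit Defensive.
Import Order.TTheory GRing.Theory Num.Theory.
Local Open Scope ring_scope.
Local Open Scope complex_scope.

Section QV.
Variable R : rcfType.
Local Notation C := R[i].

Definition adjmx m n (A : 'M[C]_(m, n)) : 'M[C]_(n, m) := map_mx Num.conj (A^T).

Definition hermitian_mx n (A : 'M[C]_n) : Prop := adjmx A = A.

Definition psd n (A : 'M[C]_n) : Prop :=
  hermitian_mx A /\ forall v : 'cV[C]_n, 0 <= (adjmx v *m A *m v) 0 0.

Definition loewner_le n (A B : 'M[C]_n) : Prop := psd (B - A).

Definition unit_vector n (psi : 'cV[C]_n) : Prop := (adjmx psi *m psi) 0 0 = 1.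

Definition proj n (psi : 'cV[C]_n) : 'M[C]_n := psi *m adjmx psi.

Definition verification_operator n (psi : 'cV[C]_n) (Om : 'M[C]_n) : Prop :=
  hermitian_mx Om /\ loewner_le 0 Om /\ loewner_le Om 1%:M /\
  Om *m psi = psi /\ \rank (eigenspace Om 1) = 1%N.

Definition density n (rho : 'M[C]_n) : Prop := psd rho /\ \tr rho = 1.

(* swap operator on H (x) H, with the index convention of mxtens (A *t B) *)
Definition swap_mx D : 'M[C]_(D * D) :=
  \matrix_(k < D * D, l < D * D)
    ((((mxtens_unindex k).1 == (mxtens_unindex l).2) &&
      ((mxtens_unindex k).2 == (mxtens_unindex l).1)))%:R.

Definition perm_invariant D (rho : 'M[C]_(D * D)) : Prop :=
  swap_mx D *m rho *m swap_mx D = rho.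

Definition p_rho D (Om : 'M[C]_D) (rho : 'M[C]_(D * D)) : C :=
  \tr ((Om *t (1%:M : 'M[C]_D)) *m rho).
Definition f_rho D (psi : 'cV[C]_D) (Om : 'M[C]_D) (rho : 'M[C]_(D * D)) : C :=
  \tr ((Om *t proj psi) *m rho).

(* "F(1, delta, Omega) >= c", where
   F(1,delta,Omega) = min { f_rho / p_rho : rho perm.-invariant density, p_rho >= delta }:
   every admissible rho has f_rho / p_rho >= c. *)
Definition F1_ge D (psi : 'cV[C]_D) (delta : R) (Om : 'M[C]_D) (c : R) : Prop :=
  forall rho : 'M[C]_(D * D), density rho -> perm_invariant rho ->
    delta%:C <= p_rho Om rho -> c%:C <= f_rho psi Om rho / p_rho Om rho.

End QV.

(* Main.v *)
Require Import Defs.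
From HB Require Import structures.
From mathcomp Require Import all_boot all_order all_algebra.
From mathcomp Require Import complex mxtens.
From mathcomp Require Import ring lra.
Import Order.TTheory GRing.Theory Num.Theory.
Local Open Scope ring_scope.

Module A1.
Import Order.TTheory GRing.Theory Num.Theory.
Set Implicit Arguments. Unset Strict Implicit. Unset Printing Implicit Defensive.
Local Open Scope ring_scope.

Section Basic.
Variable R : rcfType.
Local Notation C := R[i].

Lemma adjmxE m n (A : 'M[C]_(m, n)) i j : adjmx A i j = (A j i)^*.
Proof. by rewrite /adjmx !mxE. Qed.

Lemma adjmxK m n (A : 'M[C]_(m, n)) : adjmx (adjmx A) = A.
Proof. by apply/matrixP=> i j; rewrite !adjmxE conjCK. Qed.

Lemma adjmxD m n (A B : 'M[C]_(m, n)) : adjmx (A + B) = adjmx A + adjmx B.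
Proof. by apply/matrixP=> i j; rewrite !adjmxE !mxE rmorphD. Qed.

Lemma adjmxN m n (A : 'M[C]_(m, n)) : adjmx (- A) = - adjmx A.
Proof. by apply/matrixP=> i j; rewrite !adjmxE !mxE rmorphN. Qed.

Lemma adjmxB m n (A B : 'M[C]_(m, n)) : adjmx (A - B) = adjmx A - adjmx B.
Proof. by rewrite adjmxD adjmxN. Qed.

Lemma adjmx0 m n : adjmx (0 : 'M[C]_(m, n)) = 0.
Proof. by apply/matrixP=> i j; rewrite !adjmxE !mxE rmorph0. Qed.

Lemma adjmxZ m n k (A : 'M[C]_(m, n)) : adjmx (k *: A) = k^* *: adjmx A.
Proof. by apply/matrixP=> i j; rewrite !mxE rmorphM. Qed.

Lemma adjmx1 n : adjmx (1%:M : 'M[C]_n) = 1%:M.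
Proof.
by apply/matrixP=> i j; rewrite !mxE eq_sym rmorph_nat.
Qed.

Lemma adjmx_mul m n p (A : 'M[C]_(m, n)) (B : 'M[C]_(n, p)) :
  adjmx (A *m B) = adjmx B *m adjmx A.
Proof.
apply/matrixP=> i j; rewrite !adjmxE !mxE rmorph_sum; apply: eq_bigr => k _.
by rewrite !adjmxE rmorphM mulrC.
Qed.

Lemma adjmx_tens m n p q (A : 'M[C]_(m, n)) (B : 'M[C]_(p, q)) :
  adjmx (A *t B) = adjmx A *t adjmx B.
Proof. by apply/matrixP=> i j; rewrite !mxE rmorphM. Qed.

Lemma adjmx11 (A : 'M[C]_1) : adjmx A 0 0 = (A 0 0)^*.
Proof. by rewrite adjmxE. Qed.

Lemma tensmxDl m n p q (A B : 'M[C]_(m, n)) (M : 'M[C]_(p, q)) :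
  (A + B) *t M = A *t M + B *t M.
Proof. by apply/matrixP=> i j; rewrite !mxE mulrDl. Qed.

Lemma tensmxDr m n p q (A B : 'M[C]_(m, n)) (M : 'M[C]_(p, q)) :
  M *t (A + B) = M *t A + M *t B.
Proof. by apply/matrixP=> i j; rewrite !mxE mulrDr. Qed.

Lemma tensmxZl m n p q k (A : 'M[C]_(m, n)) (M : 'M[C]_(p, q)) :
  (k *: A) *t M = k *: (A *t M).
Proof. by apply/matrixP=> i j; rewrite !mxE mulrA. Qed.

Lemma tensmxZr m n p q k (A : 'M[C]_(m, n)) (M : 'M[C]_(p, q)) :
  M *t (k *: A) = k *: (M *t A).
Proof. by apply/matrixP=> i j; rewrite !mxE mulrCA. Qed.

Lemma tensmx11 m n : (1%:M : 'M[C]_m) *t (1%:M : 'M[C]_n) = 1%:M.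
Proof.
apply/matrixP=> i j; rewrite !mxE.
case: (mxtens_indexP i) => i1 i2; case: (mxtens_indexP j) => j1 j2.
rewrite !mxtens_indexK /=.
case: (eqVneq (mxtens_index (i1, i2)) (mxtens_index (j1, j2))) => [e|ne].
  by have := congr1 (@mxtens_unindex m n) e; rewrite !mxtens_indexK => -[-> ->]; rewrite !eqxx mulr1.
case: (eqVneq i1 j1) => [e1|]; case: (eqVneq i2 j2) => [e2|] //=; rewrite ?mul0r ?mulr0 //.
by move: ne; rewrite e1 e2 eqxx.
Qed.

Lemma tens11E (a b : 'M[C]_1) : (a *t b) 0 0 = a 0 0 * b 0 0.
Proof. by rewrite !mxE; congr (a _ _ * b _ _); apply: val_inj; rewrite /= ?divn1 ?modn1. Qed.

Definition ipm n (x : 'cV[C]_n) (M : 'M[C]_n) (y : 'cV[C]_n) := (adjmx x *m M *m y) 0 0.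

Lemma ipm_tens m n (x u : 'cV[C]_m) (y v : 'cV[C]_n) A B :
  ipm (x *t y) (A *t B) (u *t v) = ipm x A u * ipm y B v.
Proof. rewrite /ipm (adjmx_tens x y) (tensmx_mul (adjmx x) (adjmx y) A B) (tensmx_mul (adjmx x *m A) (adjmx y *m B) u v). exact: tens11E. Qed.

Lemma tr_quad n (M : 'M[C]_n) (z : 'cV[C]_n) : \tr (M *m (z *m adjmx z)) = ipm z M z.
Proof. by rewrite mulmxA mxtrace_mulC mulmxA trace_mx11. Qed.

Lemma norm_ge0 n (w : 'cV[C]_n) : 0 <= (adjmx w *m w) 0 0.
Proof.
rewrite mxE; apply: sumr_ge0 => i _; rewrite adjmxE mulrC; exact: mul_conjC_ge0.
Qed.

Lemma conj11 m (x y : 'cV[C]_m) : ((adjmx x *m y) 0 0)^* = (adjmx y *m x) 0 0.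
Proof. by rewrite -adjmx11 adjmx_mul adjmxK. Qed.

End Basic.

End A1.
Import A1.

Module A2.
Import Order.TTheory GRing.Theory Num.Theory.
Set Implicit Arguments. Unset Strict Implicit. Unset Printing Implicit Defensive.
Local Open Scope ring_scope.

Section Swap.
Variable R : rcfType.
Local Notation C := R[i].
Variable D : nat.
Local Notation S := (swap_mx R D).

Definition swapi (k : 'I_(D * D)) : 'I_(D * D) :=
  mxtens_index ((mxtens_unindex k).2, (mxtens_unindex k).1).

Lemma swapiK : involutive swapi.
Proof.
move=> k; rewrite /swapi mxtens_indexK.
by rewrite -[in RHS](@mxtens_unindexK D D k); case: (mxtens_unindex k).
Qed.

Lemma swap_entry k j : S k j = (j == swapi k)%:R :> C.
Proof.
rewrite mxE.
case: (eqVneq j (swapi k)) => [->|ne]; first by rewrite /swapi mxtens_indexK /= !eqxx.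
suff -> : ((mxtens_unindex k).1 == (mxtens_unindex j).2) &&
  ((mxtens_unindex k).2 == (mxtens_unindex j).1) = false by [].
apply: negbTE; apply/andP => -[/eqP e1 /eqP e2]; move: ne; rewrite /swapi e1 e2.
by rewrite -surjective_pairing mxtens_unindexK eqxx.
Qed.

Lemma swap_mulE p (M : 'M[C]_(D * D, p)) k l : (S *m M) k l = M (swapi k) l.
Proof.
rewrite mxE (bigD1 (swapi k)) //= big1 ?addr0; first by rewrite swap_entry eqxx mul1r.
by move=> j /negPf ne; rewrite swap_entry ne mul0r.
Qed.

Lemma swap_sym k j : S k j = S j k.
Proof.
rewrite !swap_entry.
have -> : (j == swapi k) = (k == swapi j) by apply/eqP/eqP => ->; rewrite swapiK.
by [].
Qed.

Lemma mul_swapE p (M : 'M[C]_(p, D * D)) k l : (M *m S) k l = M k (swapi l).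
Proof.
rewrite mxE (bigD1 (swapi l)) //= big1 ?addr0; first by rewrite swap_sym swap_entry eqxx mulr1.
by move=> j /negPf ne; rewrite swap_sym swap_entry ne mulr0.
Qed.

Lemma adj_swap : adjmx S = S.
Proof. by apply/matrixP=> i j; rewrite adjmxE swap_sym swap_entry rmorph_nat. Qed.

Lemma swap_tens (A B : 'M[C]_D) : S *m (A *t B) *m S = B *t A.
Proof.
apply/matrixP=> k l; rewrite mul_swapE swap_mulE !mxE /swapi !mxtens_indexK /=.
exact: mulrC.
Qed.

Lemma swap_tensv (u v : 'cV[C]_D) : S *m (u *t v) = v *t u.
Proof.
apply/matrixP=> k l; rewrite swap_mulE !mxE /swapi !mxtens_indexK /= mulrC.
have e : forall a b : 'I_1, a = b by move=> a b; rewrite (ord1 a) (ord1 b).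
by congr (v _ _ * u _ _); apply: e.
Qed.

End Swap.

End A2.
Import A2.

Module A3.
Import Order.TTheory GRing.Theory Num.Theory.
Set Implicit Arguments. Unset Strict Implicit. Unset Printing Implicit Defensive.
Local Open Scope ring_scope.
Local Open Scope complex_scope.

Section Proj.
Variable R : rcfType.
Local Notation C := R[i].
Variable D : nat.
Variable psi : 'cV[C]_D.
Hypothesis Upsi : unit_vector psi.

Local Notation P := (proj psi).
Definition Qp := 1%:M - P.
Local Notation Q := Qp.

Lemma psi_unitE : adjmx psi *m psi = 1%:M.
Proof. by rewrite [LHS]mx11_scalar Upsi. Qed.

Lemma adjP : adjmx P = P.
Proof. by rewrite /proj adjmx_mul adjmxK. Qed.

Lemma Ppsi : P *m psi = psi.
Proof. by rewrite /proj -mulmxA psi_unitE mulmx1. Qed.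

Lemma psiP : adjmx psi *m P = adjmx psi.
Proof. by rewrite /proj mulmxA psi_unitE mul1mx. Qed.

Lemma PP : P *m P = P.
Proof. by rewrite {1}/proj -mulmxA psiP. Qed.

Lemma Qpsi : Q *m psi = 0.
Proof. by rewrite /Qp mulmxBl mul1mx Ppsi subrr. Qed.

Lemma psiQ : adjmx psi *m Q = 0.
Proof. by rewrite /Qp mulmxBr mulmx1 psiP subrr. Qed.

Lemma adjQ : adjmx Q = Q.
Proof. by rewrite /Qp adjmxB adjmx1 adjP. Qed.

Lemma QQ : Q *m Q = Q.
Proof. by rewrite /Qp mulmxBl mul1mx mulmxBr mulmx1 PP subrr subr0. Qed.

Lemma PQ : P *m Q = 0.
Proof. by rewrite /Qp mulmxBr mulmx1 PP subrr. Qed.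

Lemma QP : Q *m P = 0.
Proof. by rewrite /Qp mulmxBl mul1mx PP subrr. Qed.

Lemma P_gram : P = adjmx P *m P.
Proof. by rewrite adjP PP. Qed.

Lemma Q_gram : Q = adjmx Q *m Q.
Proof. by rewrite adjQ QQ. Qed.

Lemma PaddQ : P + Q = 1%:M.
Proof. by rewrite /Qp addrC subrK. Qed.

End Proj.

Section Gram.
Variable R : rcfType.
Local Notation C := R[i].

Lemma gram_ge0 n m (Y : 'M[C]_(m, n)) (v : 'cV[C]_n) : 0 <= ipm v (adjmx Y *m Y) v.
Proof.
rewrite /ipm mulmxA -adjmx_mul -mulmxA; exact: norm_ge0.
Qed.

Lemma ipmD n (v : 'cV[C]_n) A B : ipm v (A + B) v = ipm v A v + ipm v B v.
Proof. by rewrite /ipm mulmxDr mulmxDl mxE. Qed.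

Lemma ipmZ n (v : 'cV[C]_n) k A : ipm v (k *: A) v = k * ipm v A v.
Proof. by rewrite /ipm -scalemxAr -scalemxAl mxE. Qed.

End Gram.

End A3.
Import A3.

Module A4.
Import Order.TTheory GRing.Theory Num.Theory.
Set Implicit Arguments. Unset Strict Implicit. Unset Printing Implicit Defensive.
Local Open Scope ring_scope.
Local Open Scope complex_scope.

Section Ver.
Variable R : rcfType.
Local Notation C := R[i].
Variable D : nat.
Variable psi : 'cV[C]_D.
Hypothesis Upsi : unit_vector psi.
Local Notation P := (proj psi).
Local Notation Q := (Qp psi).

Definition OmL (l : R) : 'M[C]_D := P + l%:C *: Q.

Lemma realC (l : R) : Num.conj (l%:C) = l%:C :> C.
Proof. by apply: conj_Creal; apply/complex_realP; exists l. Qed.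

Lemma OmL_ver (l : R) : 0 <= l -> l < 1 -> verification_operator psi (OmL l).
Proof.
move=> l0 l1.
have herm : hermitian_mx (OmL l).
  by rewrite /hermitian_mx /OmL adjmxD adjmxZ adjP adjQ realC.
split => //; split; [|split; [|split]].
- split; first by rewrite /loewner_le subr0.
  move=> v; rewrite subr0 -/(ipm v _ v) /OmL ipmD ipmZ.
  apply: addr_ge0; first by rewrite P_gram //; apply: gram_ge0.
  apply: mulr_ge0; first by rewrite ler0c.
  by rewrite Q_gram //; apply: gram_ge0.
- rewrite /loewner_le; have -> : 1%:M - OmL l = (1 - l)%:C *: Q.
    rewrite /OmL -(PaddQ psi) rmorphB /= scalerBl scale1r.
    by rewrite opprD addrACA subrr add0r.
  split; first by rewrite /hermitian_mx adjmxZ adjQ realC.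
  move=> v; rewrite -/(ipm v _ v) ipmZ; apply: mulr_ge0; first by rewrite ler0c subr_ge0 ltW.
  by rewrite Q_gram //; apply: gram_ge0.
- by rewrite /OmL mulmxDl Ppsi // -scalemxAl Qpsi // scaler0 addr0.
- rewrite /eigenspace.
  have Ek : OmL l - 1%:M = (l - 1)%:C *: Q.
    rewrite /OmL -(PaddQ psi) rmorphB /= scalerBl scale1r.
    by rewrite opprD addrACA subrr add0r.
  have l1n : (l - 1)%:C != 0 :> C.
    by apply/eqP => /complexI /eqP; rewrite subr_eq0 => /eqP e; move: l1; rewrite e ltxx.
  have -> : \rank (kermx (OmL l - (1 : C)%:M)) = \rank (adjmx psi).
    apply: eqmx_rank; apply/andP; split.
      apply/row_subP => i.
      set r := row i _.
      have rQ : r *m Q = 0.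
        have : r *m (OmL l - 1%:M) = 0 by rewrite /r -row_mul mulmx_ker row0.
        by rewrite Ek -scalemxAr => /eqP; rewrite scaler_eq0 (negPf l1n) /= => /eqP.
      have -> : r = (r *m psi) *m adjmx psi.
        by rewrite -mulmxA -/(proj psi) -[r in LHS]mulmx1 -(PaddQ psi) mulmxDr rQ addr0.
      exact: submxMl.
    apply/sub_kermxP; rewrite Ek -scalemxAr psiQ // scaler0 //.
  rewrite rank_rV; apply/eqP; rewrite eqb1; apply/eqP => e.
  have := psi_unitE Upsi; rewrite e mul0mx => /matrixP /(_ 0 0); rewrite !mxE /=.
  by move/eqP; rewrite eq_sym oner_eq0.
Qed.

End Ver.

End A4.
Import A4.

Module A5.
Import Order.TTheory GRing.Theory Num.Theory.
Set Implicit Arguments. Unset Strict Implicit. Unset Printing Implicit Defensive.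
Local Open Scope ring_scope.
Local Open Scope complex_scope.

Section Suff.
Variable R : rcfType.
Local Notation C := R[i].

Lemma tr_gram_ge0 n m (Z : 'M[C]_(m, n)) (rho : 'M[C]_n) :
  psd rho -> 0 <= \tr (adjmx Z *m Z *m rho).
Proof.
move=> [_ Hr]; rewrite -mulmxA mxtrace_mulC.
rewrite /mxtrace; apply: sumr_ge0 => i _.
have -> : (Z *m rho *m adjmx Z) i i = ipm (adjmx (row i Z)) rho (adjmx (row i Z)).
  rewrite /ipm adjmxK -row_mul !mxE; apply: eq_bigr => k _; rewrite !mxE.
  by congr (_ * _); apply: eq_bigr => j _; rewrite !mxE.
exact: Hr.
Qed.

Variable D : nat.
Variable psi : 'cV[C]_D.
Hypothesis Upsi : unit_vector psi.
Local Notation P := (proj psi).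
Local Notation Q := (Qp psi).

Variable rho : 'M[C]_(D * D).
Hypothesis Drho : density rho.
Hypothesis Srho : perm_invariant rho.

Definition tt (X Y : 'M[C]_D) := \tr ((X *t Y) *m rho).

Lemma tt_ge0 X Y : X = adjmx X *m X -> Y = adjmx Y *m Y -> 0 <= tt X Y.
Proof.
move=> eX eY; rewrite /tt eX eY -tensmx_mul -adjmx_tens.
apply: tr_gram_ge0; exact: Drho.1.
Qed.

Lemma tt_sym X Y : tt X Y = tt Y X.
Proof.
rewrite /tt -[Y *t X](swap_tens X Y).
set S := swap_mx R D; set A := X *t Y.
rewrite -{1}Srho -/S.
have -> : S *m A *m S *m rho = S *m (A *m S *m rho) by rewrite !mulmxA.
by rewrite [RHS]mxtrace_mulC !mulmxA.
Qed.

Lemma ttDl X1 X2 Y : tt (X1 + X2) Y = tt X1 Y + tt X2 Y.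
Proof. by rewrite /tt tensmxDl mulmxDl mxtraceD. Qed.
Lemma ttDr X Y1 Y2 : tt X (Y1 + Y2) = tt X Y1 + tt X Y2.
Proof. by rewrite /tt tensmxDr mulmxDl mxtraceD. Qed.
Lemma ttZl k X Y : tt (k *: X) Y = k * tt X Y.
Proof. by rewrite /tt tensmxZl -scalemxAl mxtraceZ. Qed.

Lemma p_dec l : p_rho (OmL psi l) rho = tt P P + tt P Q + l%:C * (tt Q P + tt Q Q).
Proof.
rewrite /p_rho -/(tt _ _) -(PaddQ psi) /OmL.
by rewrite (ttDl P) (ttDr P P Q) ttZl (ttDr Q P Q).
Qed.

Lemma f_dec l : f_rho psi (OmL psi l) rho = tt P P + l%:C * tt Q P.
Proof. by rewrite /f_rho -/(tt _ _) /OmL (ttDl P) ttZl. Qed.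

Lemma tr_dec : tt P P + tt P Q + tt Q P + tt Q Q = 1.
Proof.
rewrite -Drho.2 -[X in _ = \tr X]mul1mx -(tensmx11 R D D) -/(tt _ _) -(PaddQ psi).
by rewrite (ttDl P Q) (ttDr P P Q) (ttDr Q P Q) !addrA.
Qed.

Lemma re_ge0 (z : C) : 0 <= z -> z = (complex.Re z)%:C /\ 0 <= complex.Re z.
Proof.
move=> z0; have e := RRe_real (ger0_real z0); split => //.
by rewrite -ler0c e.
Qed.

Lemma suff_main (l c delta : R) : 0 <= l -> l < 1 -> 0 < delta ->
  (forall a b cc : R, 0 <= a -> 0 <= b -> 0 <= cc -> a + 2 * b + cc = 1 ->
     delta <= a + b + l * b + l * cc -> c * (a + b + l * b + l * cc) <= a + l * b) ->
  delta%:C <= p_rho (OmL psi l) rho -> c%:C <= f_rho psi (OmL psi l) rho / p_rho (OmL psi l) rho.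
Proof.
move=> l0 l1 d0 H.
have [ePP hPP] := re_ge0 (tt_ge0 (P_gram Upsi) (P_gram Upsi)).
have [ePQ hPQ] := re_ge0 (tt_ge0 (P_gram Upsi) (Q_gram Upsi)).
have [eQQ hQQ] := re_ge0 (tt_ge0 (Q_gram Upsi) (Q_gram Upsi)).
have eQP : tt Q P = tt P Q by apply: tt_sym.
set a := complex.Re (tt P P) in ePP hPP *.
set b := complex.Re (tt P Q) in ePQ hPQ *.
set cc := complex.Re (tt Q Q) in eQQ hQQ *.
have Hs : a + 2 * b + cc = 1.
  apply: (@complexI R); rewrite rmorph1 -tr_dec eQP ePP ePQ eQQ.
  by rewrite !rmorphD /= !rmorphM /= rmorph_nat mulr_natl mulr2n !addrA.
move=> Hd; move: Hd; rewrite (p_dec l) (f_dec l) eQP ePP ePQ eQQ.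
have -> : (a%:C + b%:C + l%:C * (b%:C + cc%:C)) = (a + b + l * b + l * cc)%:C.
  by rewrite !rmorphD !rmorphM /= mulrDr !addrA.
have -> : (a%:C + l%:C * b%:C) = (a + l * b)%:C by rewrite !rmorphD !rmorphM.
rewrite lecR => Hd.
rewrite -fmorph_div lecR ler_pdivlMr; last exact: lt_le_trans Hd.
exact: H.
Qed.

End Suff.

End A5.
Import A5.

Module A6.
Import Order.TTheory GRing.Theory Num.Theory.
Set Implicit Arguments. Unset Strict Implicit. Unset Printing Implicit Defensive.
Local Open Scope ring_scope.
Local Open Scope complex_scope.

Section Nec.
Variable R : rcfType.
Local Notation C := R[i].

Lemma ipmDl n (x y z : 'cV[C]_n) M : ipm (x + y) M z = ipm x M z + ipm y M z.
Proof. by rewrite /ipm adjmxD !mulmxDl mxE. Qed.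
Lemma ipmDr n (x y z : 'cV[C]_n) M : ipm z M (x + y) = ipm z M x + ipm z M y.
Proof. by rewrite /ipm mulmxDr mxE. Qed.

Lemma mx11_mulE (x : 'M[C]_(1, 1)) (y : 'M[C]_1) : (x *m y) 0 0 = x 0 0 * y 0 0.
Proof. by rewrite mxE big_ord1. Qed.

Variable D : nat.
Variable psi w : 'cV[C]_D.
Hypothesis Upsi : unit_vector psi.
Hypothesis Uw : adjmx w *m w = 1%:M.
Hypothesis Opw : adjmx psi *m w = 0.
Variable Om : 'M[C]_D.
Hypothesis Hherm : hermitian_mx Om.
Hypothesis Hfix : Om *m psi = psi.
Local Notation P := (proj psi).

Lemma Owp : adjmx w *m psi = 0.
Proof. by rewrite -[adjmx w *m psi]adjmxK adjmx_mul adjmxK Opw adjmx0. Qed.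

Lemma psiOm : adjmx psi *m Om = adjmx psi.
Proof. by rewrite -{1}Hherm -adjmx_mul Hfix. Qed.

Lemma i_pp_Om : ipm psi Om psi = 1.
Proof. by rewrite /ipm -mulmxA Hfix (psi_unitE Upsi) mxE. Qed.
Lemma i_pw_Om : ipm psi Om w = 0.
Proof. by rewrite /ipm psiOm Opw mxE. Qed.
Lemma i_wp_Om : ipm w Om psi = 0.
Proof. by rewrite /ipm -mulmxA Hfix Owp mxE. Qed.
Lemma i_1 (x y : 'cV[C]_D) : ipm x 1%:M y = (adjmx x *m y) 0 0.
Proof. by rewrite /ipm mulmx1. Qed.
Lemma i_P (x y : 'cV[C]_D) : ipm x P y = (adjmx x *m psi) 0 0 * (adjmx psi *m y) 0 0.
Proof. by rewrite /ipm /proj !mulmxA -mulmxA mx11_mulE. Qed.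

Definition z1 : 'cV[C]_(D * D) := psi *t psi.
Definition z2 : 'cV[C]_(D * D) := psi *t w + w *t psi.
Definition z3 : 'cV[C]_(D * D) := w *t w.

Definition rhoN (a b c : R) : 'M[C]_(D * D) :=
  a%:C *: (z1 *m adjmx z1) + b%:C *: (z2 *m adjmx z2) + c%:C *: (z3 *m adjmx z3).

Lemma tr_rhoN a b c M : \tr (M *m rhoN a b c) =
  a%:C * ipm z1 M z1 + b%:C * ipm z2 M z2 + c%:C * ipm z3 M z3.
Proof. by rewrite /rhoN !mulmxDr !mxtraceD -!scalemxAr !mxtraceZ !tr_quad. Qed.

Lemma z2_tens A B : ipm z2 (A *t B) z2 =
  ipm psi A psi * ipm w B w + ipm psi A w * ipm w B psi +
  ipm w A psi * ipm psi B w + ipm w A w * ipm psi B psi.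
Proof.
rewrite /z2 !ipmDl !ipmDr !ipm_tens.
by rewrite !addrA.
Qed.


Variable l : R.
Hypothesis Hl : ipm w Om w = l%:C.

Lemma i_ww1 : ipm w 1%:M w = 1.
Proof. by rewrite i_1 Uw mxE. Qed.
Lemma i_pp1 : ipm psi 1%:M psi = 1.
Proof. by rewrite i_1 (psi_unitE Upsi) mxE. Qed.
Lemma i_pw1 : ipm psi 1%:M w = 0.
Proof. by rewrite i_1 Opw mxE. Qed.
Lemma i_wp1 : ipm w 1%:M psi = 0.
Proof. by rewrite i_1 Owp mxE. Qed.
Lemma i_ppP : ipm psi P psi = 1.
Proof. by rewrite i_P (psi_unitE Upsi) mxE mulr1. Qed.
Lemma i_wwP : ipm w P w = 0.
Proof. by rewrite i_P Owp mxE mul0r. Qed.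
Lemma i_pwP : ipm psi P w = 0.
Proof. by rewrite i_P Opw [(0 : 'M[C]_1) 0 0]mxE mulr0. Qed.
Lemma i_wpP : ipm w P psi = 0.
Proof. by rewrite i_P Owp mxE mul0r. Qed.

Lemma p_rhoN a b c : p_rho Om (rhoN a b c) = (a + b + l * b + l * c)%:C.
Proof.
rewrite /p_rho tr_rhoN z2_tens /z1 /z3 !ipm_tens.
rewrite i_pp_Om i_pw_Om i_wp_Om Hl i_ww1 i_pp1 i_pw1 i_wp1.
rewrite !rmorphD !rmorphM /=; ring.
Qed.

Lemma f_rhoN a b c : f_rho psi Om (rhoN a b c) = (a + l * b)%:C.
Proof.
rewrite /f_rho tr_rhoN z2_tens /z1 /z3 !ipm_tens.
rewrite i_pp_Om i_pw_Om i_wp_Om Hl i_ppP i_wwP i_pwP i_wpP.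
rewrite !rmorphD !rmorphM /=; ring.
Qed.

Lemma tr_rhoN1 a b c : \tr (rhoN a b c) = (a + 2 * b + c)%:C.
Proof.
rewrite -[rhoN a b c]mul1mx -(tensmx11 R D D) tr_rhoN z2_tens /z1 /z3 !ipm_tens.
rewrite i_ww1 i_pp1 i_pw1 i_wp1.
rewrite !rmorphD !rmorphM /= rmorph_nat; ring.
Qed.


Lemma swap_outer (z : 'cV[C]_(D * D)) : swap_mx R D *m z = z ->
  swap_mx R D *m (z *m adjmx z) *m swap_mx R D = z *m adjmx z.
Proof.
move=> e; rewrite -{2}(adj_swap R D) !mulmxA -mulmxA -adjmx_mul.
by rewrite e.
Qed.

Lemma perm_sum3 (y1 y2 y3 : 'cV[C]_(D * D)) k1 k2 k3 :
  swap_mx R D *m y1 = y1 -> swap_mx R D *m y2 = y2 -> swap_mx R D *m y3 = y3 ->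
  perm_invariant (k1 *: (y1 *m adjmx y1) + k2 *: (y2 *m adjmx y2) + k3 *: (y3 *m adjmx y3)).
Proof.
move=> e1 e2 e3.
rewrite /perm_invariant !mulmxDr !mulmxDl -!scalemxAr -!scalemxAl.
rewrite swap_outer // swap_outer // swap_outer //.
Qed.

Lemma rhoN_perm a b c : perm_invariant (rhoN a b c).
Proof.
apply: perm_sum3.
- by rewrite /z1 swap_tensv.
- by rewrite /z2 mulmxDr !swap_tensv addrC.
- by rewrite /z3 swap_tensv.
Qed.


Lemma outer_ge0 n (z v : 'cV[C]_n) : 0 <= ipm v (z *m adjmx z) v.
Proof.
rewrite /ipm mulmxA -mulmxA mx11_mulE -conj11 mulrC; exact: mul_conjC_ge0.
Qed.

Lemma psd_sum3 n (y1 y2 y3 : 'cV[C]_n) (k1 k2 k3 : R) : 0 <= k1 -> 0 <= k2 -> 0 <= k3 ->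
  psd (k1%:C *: (y1 *m adjmx y1) + k2%:C *: (y2 *m adjmx y2) + k3%:C *: (y3 *m adjmx y3)).
Proof.
move=> h1 h2 h3; split.
  rewrite /hermitian_mx !adjmxD !adjmxZ !adjmx_mul !adjmxK.
  by rewrite !realC.
move=> v; rewrite -/(ipm v _ v) !ipmD !ipmZ.
by rewrite !addr_ge0 // mulr_ge0 ?ler0c // outer_ge0.
Qed.

Lemma rhoN_density a b c : 0 <= a -> 0 <= b -> 0 <= c -> a + 2 * b + c = 1 ->
  density (rhoN a b c).
Proof.
move=> a0 b0 c0 s1; split; last by rewrite tr_rhoN1 s1.
exact: psd_sum3.
Qed.

End Nec.

End A6.
Import A6.

Module A7.
Import Order.TTheory GRing.Theory Num.Theory.
Set Implicit Arguments. Unset Strict Implicit. Unset Printing Implicit Defensive.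
Local Open Scope ring_scope.
Local Open Scope complex_scope.

Section Exw.
Variable R : rcfType.
Local Notation C := R[i].

Lemma norm_eq0 n (v : 'cV[C]_n) : (adjmx v *m v) 0 0 = 0 -> v = 0.
Proof.
rewrite mxE => /eqP; rewrite psumr_eq0 => [/allP H|i _]; last first.
  by rewrite adjmxE mulrC mul_conjC_ge0.
apply/matrixP => i j; rewrite (ord1 j) mxE.
have := H i (mem_index_enum i); rewrite adjmxE mulf_eq0 conjC_eq0 orbb.
by move/eqP.
Qed.

Variable D : nat.
Variable psi : 'cV[C]_D.
Hypothesis Upsi : unit_vector psi.
Hypothesis HD : (2 <= D)%N.

Lemma exists_w : exists w : 'cV[C]_D, adjmx w *m w = 1%:M /\ adjmx psi *m w = 0.
Proof.
set Q := Qp psi.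
pose w0 (i : 'I_D) : 'cV[C]_D := Q *m delta_mx i 0.
case: (boolP [exists i, (adjmx (w0 i) *m w0 i) 0 0 != 0]) => [/existsP [i ni]|]; last first.
  rewrite negb_exists => /forallP H.
  have Q0 : Q = 0.
    apply/matrixP => j i; have := H i; rewrite negbK => /eqP /norm_eq0 /matrixP /(_ j 0).
    by rewrite /w0 -colE !mxE.
  have : (1%:M : 'M[C]_D) = proj psi by rewrite -(PaddQ psi) -/Q Q0 addr0.
  move/(congr1 mxtrace); rewrite mxtrace1 /proj mxtrace_mulC trace_mx11 Upsi.
  move/eqP; rewrite pnatr_eq1 => /eqP eD; exfalso; have h := HD; by rewrite eD in h.
have [e r0] := re_ge0 (norm_ge0 (w0 i)).
set r := complex.Re _ in e r0.
have rp : 0 < r by rewrite lt_def r0 andbT; apply: contra ni => /eqP r00; rewrite e r00.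
exists ((Num.sqrt r)^-1%:C *: w0 i); split.
  rewrite adjmxZ -scalemxAl -scalemxAr scalerA [adjmx (w0 i) *m w0 i]mx11_scalar e realC.
  rewrite -rmorphM scale_scalar_mx -rmorphM.
  have -> : (Num.sqrt r)^-1 / Num.sqrt r * r = 1.
    rewrite -invfM -expr2 sqr_sqrtr // mulVf //; exact: lt0r_neq0.
  by rewrite rmorph1.
by rewrite -scalemxAr /w0 mulmxA psiQ // mul0mx scaler0.
Qed.

End Exw.

End A7.
Import A7.

Module A8.
Import Order.TTheory GRing.Theory Num.Theory.
Set Implicit Arguments. Unset Strict Implicit. Unset Printing Implicit Defensive.
Local Open Scope ring_scope.

Section Real.
Variable R : rcfType.

Definition Hreal (l c d : R) := forall a b cc : R, 0 <= a -> 0 <= b -> 0 <= cc ->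
  a + 2 * b + cc = 1 -> d <= a + b + l * b + l * cc -> c * (a + b + l * b + l * cc) <= a + l * b.

Lemma nec (l c d : R) : 0 <= l -> l <= 1 -> 0 < d -> d < 1 -> 0 < c -> Hreal l c d ->
  d * c <= Num.max (2 - 2 * Num.sqrt (1 - d) - d) (2 * d - 1).
Proof.
move=> l0 l1 d0 d1 c0 H.
set s := Num.sqrt (1 - d).
have s0 : 0 <= s by apply: sqrtr_ge0.
have ss : s * s = 1 - d by rewrite -expr2 sqr_sqrtr // subr_ge0 ltW.
case: (leP d l) => [dl|ld].
  have e1 : 0 + 2 * 0 + 1 = 1 :> R by ring.
  have := H 0 0 1 (lexx _) (lexx _) ler01 e1.
  have -> : 0 + 0 + l * 0 + l * 1 = l by ring.
  move=> /(_ dl) h; exfalso.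
  have : 0 < c * l by apply: mulr_gt0 => //; apply: lt_le_trans dl.
  have e2 : 0 + l * 0 = 0 :> R by ring.
  rewrite e2 in h; lra.
have l1' : 0 < 1 - l by lra.
case: (leP l (2 * d - 1)) => [h2|h2].
  set b := (1 - d) / (1 - l).
  have eb : b * (1 - l) = 1 - d by rewrite /b mulfVK // lt0r_neq0.
  have b0 : 0 <= b by apply: divr_ge0; lra.
  have a0 : 0 <= 1 - 2 * b by nra.
  have e1 : 1 - 2 * b + 2 * b + 0 = 1 by ring.
  have e2 : d <= 1 - 2 * b + b + l * b + l * 0 by nra.
  have hf := H _ _ _ a0 b0 (lexx _) e1 e2.
  rewrite le_max; apply/orP; right; nra.
set b := (d - l) / (1 - l).
have eb : b * (1 - l) = d - l by rewrite /b mulfVK // lt0r_neq0.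
have b0 : 0 <= b by apply: divr_ge0; lra.
have c0' : 0 <= 1 - 2 * b by nra.
have e1 : 0 + 2 * b + (1 - 2 * b) = 1 by ring.
have e2 : d <= 0 + b + l * b + l * (1 - 2 * b) by nra.
have hf := H _ _ _ (lexx _) b0 c0' e1 e2.
have e3 : 0 + b + l * b + l * (1 - 2 * b) = d by nra.
rewrite e3 add0r in hf.
rewrite le_max; apply/orP; left.
have : (l * b) * (1 - l) <= (1 - s) ^+ 2 * (1 - l).
  have -> : (l * b) * (1 - l) = l * (d - l) by rewrite -mulrA eb.
  have -> : d = 1 - s * s by rewrite ss; ring.
  have : 0 <= (1 - s - l) ^+ 2 by apply: sqr_ge0.
  nra.
move=> h; have : l * b <= (1 - s) ^+ 2.
  by rewrite -(ler_pM2r l1').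
nra.
Qed.


Lemma suf (c d : R) : 0 < d -> d < 1 -> 0 < c -> c < 1 ->
  d * c <= Num.max (2 - 2 * Num.sqrt (1 - d) - d) (2 * d - 1) ->
  exists l, [/\ 0 <= l, l < 1 & Hreal l c d].
Proof.
move=> d0 d1 c0 c1; rewrite le_max => /orP [h|h]; last first.
  exists 0; split => //; move=> a b cc a0 b0 cc0 e hp.
  rewrite !mul0r !addr0 in hp *.
  have ha : 2 * d - 1 <= a by nra.
  nra.
set s := Num.sqrt (1 - d).
have s0 : 0 <= s by apply: sqrtr_ge0.
have ss : s * s = 1 - d by rewrite -expr2 sqr_sqrtr // subr_ge0 ltW.
have sp : 0 < s by rewrite lt_def s0 andbT; apply/eqP => e; move: ss; rewrite e mul0r; lra.
have s1 : s < 1 by nra.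
exists (1 - s); split; [lra | lra |].
move=> a b cc a0 b0 cc0 e hp.
set l := 1 - s in hp *.
set p := a + b + l * b + l * cc in hp *.
have key : s * (d * (a + l * b) - l ^+ 2 * p) = l * (s * s * (2 - l) * a + l * (p - d)).
  rewrite /p /l.
  have -> : d = 1 - s * s by rewrite ss; ring.
  have -> : cc = 1 - a - 2 * b by lra.
  ring.
have h1 : 0 <= d * (a + l * b) - l ^+ 2 * p.
  have : 0 <= s * (d * (a + l * b) - l ^+ 2 * p).
    rewrite key /l; apply: mulr_ge0; first lra.
    apply: addr_ge0; last by apply: mulr_ge0; lra.
    apply: mulr_ge0 => //; apply: mulr_ge0; [exact: mulr_ge0 | lra].
  by rewrite pmulr_rge0.
have h2 : d * c <= l ^+ 2.
  have e2 : l ^+ 2 = 2 - 2 * s - d.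
    rewrite /l.
    have -> : d = 1 - s * s by rewrite ss; ring.
    ring.
  by rewrite e2.
have p0 : 0 <= p by lra.
nra.
Qed.


Lemma frac_le (x y z : R) : 0 < y -> 0 < z -> (x / y <= z) = (x <= z * y).
Proof. by move=> y0 z0; rewrite ler_pdivrMr. Qed.

Lemma eqv1 (eps d : R) : 0 < eps -> eps < 1 -> 0 < d -> d < 1 ->
  (d * (1 - eps) <= Num.max (2 - 2 * Num.sqrt (1 - d) - d) (2 * d - 1)) =
  (Num.min (4 * (1 - eps) / (2 - eps) ^+ 2) (1 / (1 + eps)) <= d).
Proof.
move=> e0 e1 d0 d1.
rewrite le_max ge_min.
have p1 : 0 < 1 + eps by lra.
have p2 : 0 < (2 - eps) ^+ 2 by rewrite exprn_gt0 //; lra.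
rewrite !ler_pdivrMr //.
set s := Num.sqrt (1 - d).
have s0 : 0 <= s by apply: sqrtr_ge0.
have ss : s * s = 1 - d by rewrite -expr2 sqr_sqrtr // subr_ge0 ltW.
congr (_ || _); apply/idP/idP => h.
- have T0 : 0 <= 2 - d * (2 - eps) by nra.
  nra.
- have T0 : 0 < 2 - d * (2 - eps) by nra.
  have hq : 0 <= (2 - d * (2 - eps)) ^+ 2 - 4 * (s * s).
    rewrite ss.
    have -> : (2 - d * (2 - eps)) ^+ 2 - 4 * (1 - d) = d * (d * (2 - eps) ^+ 2 - 4 * (1 - eps)) by ring.
    apply: mulr_ge0; lra.
  rewrite leNgt; apply/negP => hlt.
  have : 0 < (2 * s - (2 - d * (2 - eps))) * (2 * s + (2 - d * (2 - eps))).
    apply: mulr_gt0; lra.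
  nra.
- nra.
- nra.
Qed.

Lemma eqv2 (eps : R) : 0 < eps -> eps < 1 ->
  Num.min (4 * (1 - eps) / (2 - eps) ^+ 2) (1 / (1 + eps)) =
    (if eps <= 4 / 5 then 1 / (1 + eps) else 4 * (1 - eps) / (2 - eps) ^+ 2).
Proof.
move=> e0 e1.
have p1 : 0 < 1 + eps by lra.
have p2 : 0 < (2 - eps) ^+ 2 by rewrite exprn_gt0 //; lra.
have e45 : (eps <= 4 / 5) = (5 * eps <= 4).
  by rewrite ler_pdivlMr ?ltr0n // mulrC.
rewrite e45; case: ifP => h.
  apply: min_r; rewrite ler_pdivlMr // mulrAC ler_pdivrMr //; nra.
apply: min_l; rewrite ler_pdivlMr // mulrAC ler_pdivrMr //.
move/negbT: h; rewrite -ltNge => h; nra.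
Qed.

End Real.

End A8.
Import A8.

Module A9.
Import Order.TTheory GRing.Theory Num.Theory.
Set Implicit Arguments. Unset Strict Implicit. Unset Printing Implicit Defensive.
Local Open Scope ring_scope.

Lemma mxsubE (R : zmodType) m n (A B : 'M[R]_(m, n)) i j : (A - B) i j = A i j - B i j.
Proof. by rewrite !mxE. Qed.

Section Main.
Local Open Scope complex_scope.

Lemma main_iff (R : rcfType) (D : nat) (psi : 'cV[R[i]]_D) (eps delta : R) :
  (2 <= D)%N -> unit_vector psi ->
  0 < eps < 1 -> 0 < delta < 1 ->
  ((exists Om : 'M[R[i]]_D, verification_operator psi Om /\ F1_ge psi delta Om (1 - eps))
     <-> delta * (1 - eps) <= Num.max (2 - 2 * Num.sqrt (1 - delta) - delta) (2 * delta - 1)).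
Proof.
move=> HD Upsi /andP [e0 e1] /andP [d0 d1].
have c0 : 0 < 1 - eps by lra.
have c1 : 1 - eps < 1 by lra.
split.
- move=> [Om [[Hh [H0 [H1 [Hf _]]]] HF]].
  have [w [Uw Opw]] := exists_w Upsi HD.
  have lge0 : 0 <= ipm w Om w.
    by have := H0.2 w; rewrite subr0.
  have [el l0] := re_ge0 lge0.
  set l := complex.Re _ in el l0.
  have l1 : l <= 1.
    have := H1.2 w; rewrite mulmxBr mulmxBl mulmx1 Uw mxsubE -/(ipm w Om w) el.
    by rewrite [1%:M 0 0]mxE /= -(rmorph1 (real_complex R)) -rmorphB lecR subr_ge0.
  apply: (@nec R l (1 - eps) delta) => // a b cc a0 b0 cc0 es hp.
  have Hd := rhoN_density Upsi Uw Opw a0 b0 cc0 es.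
  have Hp := rhoN_perm psi w a b cc.
  have := HF _ Hd Hp.
  rewrite (p_rhoN Upsi Uw Opw Hh Hf el) (f_rhoN Upsi Opw Hh Hf el) lecR => /(_ hp).
  rewrite -fmorph_div lecR ler_pdivlMr //; lra.
- move=> h.
  have [l [l0 l1 Hl]] := suf d0 d1 c0 c1 h.
  exists (OmL psi l); split; first exact: OmL_ver.
  move=> rho Drho Srho; apply: suff_main => //.
Qed.

End Main.

End A9.
Import A9.

Unset Implicit Arguments.
Local Open Scope ring_scope.

Theorem corollary5 (R : rcfType) (D : nat) (psi : 'cV[R[i]]_D) (eps delta : R) :
  (2 <= D)%N -> unit_vector psi ->
  0 < eps < 1 -> 0 < delta < 1 ->
  ((exists Om : 'M[R[i]]_D, verification_operator psi Om /\ F1_ge psi delta Om (1 - eps))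
     <-> delta * (1 - eps) <= Num.max (2 - 2 * Num.sqrt (1 - delta) - delta) (2 * delta - 1))
  /\
  ((exists Om : 'M[R[i]]_D, verification_operator psi Om /\ F1_ge psi delta Om (1 - eps))
     <-> Num.min (4 * (1 - eps) / (2 - eps) ^+ 2) (1 / (1 + eps)) <= delta)
  /\
  Num.min (4 * (1 - eps) / (2 - eps) ^+ 2) (1 / (1 + eps)) =
    (if eps <= 4 / 5 then 1 / (1 + eps) else 4 * (1 - eps) / (2 - eps) ^+ 2).
Proof.
move=> HD Upsi he hd.
have H := main_iff HD Upsi he hd.
case/andP: he => e0 e1; case/andP: hd => d0 d1.
split; first exact: H.
split; last exact: eqv2.
by rewrite -eqv1.
Qed.
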